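(* Let $\mathcal C$ be a full trio. If the simultaneous unboundedness problem is decidable for $\mathcal C$, then the diagonal problem is decidable for $\mathcal C$.
   Context: A full trio is a nonempty class of (effectively represented) languages effectively closed under $B$-projection (keeping only symbols of $B$), $B$-upward closure (inserting arbitrary symbols of $B$), for every finite alphabet $B$, and under intersection with regular languages. For $A=\{a_1,\dots,a_n\}$ the Parikh image of $w$ is $(\#_{a_1}(w),\dots,\#_{a_n}(w))$. The diagonal problem: given $L\subseteq A^*$ in $\mathcal C$, decide whether every tuple $(m,\dots,m)\in\mathbb N^n$ is componentwise dominated by the Parikh image of some word of $L$. The SUP is this problem restricted to inputs $L\subseteq b_1^*\cdots b_n^*$ where $b_1,\dots,b_n$ is some enumeration of $A$. *)

(* Defs.v *)
From mathcomp Require Import all_boot.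
Set Implicit Arguments. Unset Strict Implicit. Unset Printing Implicit Defensive.

(* Computability: total recursive functions on nat (Kleene), made     *)
(* unary via the Cantor pairing function.                             *)

Definition cpair (x y : nat) : nat := (x + y) * (x + y).+1 %/ 2 + y.

Fixpoint cunpair (n : nat) : nat * nat :=
  match n with
  | 0 => (0, 0)
  | n'.+1 => let: (x, y) := cunpair n' in
             match x with
             | 0 => (y.+1, 0)
             | x'.+1 => (x', y.+1)
             end
  end.

Definition cfst (n : nat) : nat := (cunpair n).1.
Definition csnd (n : nat) : nat := (cunpair n).2.

Inductive computable : (nat -> nat) -> Prop :=
| c_zero : computable (fun _ => 0)
| c_succ : computable S
| c_fst : computable cfst
| c_snd : computable csnd
| c_pair f g : computable f -> computable g ->
    computable (fun x => cpair (f x) (g x))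
| c_comp f g : computable f -> computable g -> computable (fun x => f (g x))
| c_rec f g h : computable f -> computable g ->
    (forall a, h (cpair a 0) = f a) ->
    (forall a n, h (cpair a n.+1) = g (cpair a (cpair n (h (cpair a n))))) ->
    computable h
| c_min f g : computable f ->
    (forall x, f (cpair x (g x)) = 0 /\ forall m, m < g x -> f (cpair x m) <> 0) ->
    computable g.

Fixpoint code_seq (s : seq nat) : nat :=
  match s with
  | [::] => 0
  | x :: s' => (cpair x (code_seq s')).+1
  end.

Definition lang := seq nat -> Prop.

Inductive regex : Type :=
| RNone
| REps
| RChr of nat
| RCat of regex & regex
| RAlt of regex & regex
| RStar of regex.

Inductive rmatch : regex -> seq nat -> Prop :=
| m_eps : rmatch REps [::]
| m_chr a : rmatch (RChr a) [:: a]
| m_cat r s u v : rmatch r u -> rmatch s v -> rmatch (RCat r s) (u ++ v)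
| m_altl r s u : rmatch r u -> rmatch (RAlt r s) u
| m_altr r s u : rmatch s u -> rmatch (RAlt r s) u
| m_star0 r : rmatch (RStar r) [::]
| m_starS r u v : rmatch r u -> rmatch (RStar r) v -> rmatch (RStar r) (u ++ v).

Fixpoint code_regex (r : regex) : nat :=
  match r with
  | RNone => cpair 0 0
  | REps => cpair 1 0
  | RChr a => cpair 2 a
  | RCat r s => cpair 3 (cpair (code_regex r) (code_regex s))
  | RAlt r s => cpair 4 (cpair (code_regex r) (code_regex s))
  | RStar r => cpair 5 (code_regex r)
  end.

Inductive ins (B : seq nat) : seq nat -> seq nat -> Prop :=
| ins_nil : ins B [::] [::]
| ins_keep x w u : ins B w u -> ins B (x :: w) (x :: u)
| ins_add b w u : b \in B -> ins B w u -> ins B w (b :: u).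

Fixpoint in_blocks (bs : seq nat) (w : seq nat) : Prop :=
  match bs with
  | [::] => w = [::]
  | b :: bs' => exists k w', w = nseq k b ++ w' /\ in_blocks bs' w'
  end.

(* Effectively represented classes: a code d : nat denotes sem d.     *)

Definition full_trio (sem : nat -> lang) : Prop :=
  (forall d, exists A : seq nat, forall w, sem d w -> all (fun a => a \in A) w) /\
  (exists f, computable f /\ forall (B : seq nat) d w,
      sem (f (cpair (code_seq B) d)) w <->
      exists u, sem d u /\ w = filter (fun a => a \in B) u) /\
  (exists f, computable f /\ forall (B : seq nat) d w,
      sem (f (cpair (code_seq B) d)) w <-> exists u, sem d u /\ ins B u w) /\
  (exists f, computable f /\ forall (r : regex) d w,
      sem (f (cpair d (code_regex r))) w <-> sem d w /\ rmatch r w).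

Definition diag_unbounded (A : seq nat) (L : lang) : Prop :=
  forall m, exists w, L w /\ forall a, a \in A -> m <= count_mem a w.

Definition diagonal_decidable (sem : nat -> lang) : Prop :=
  exists f, computable f /\
    forall (A : seq nat) d, uniq A ->
      (forall w, sem d w -> all (fun a => a \in A) w) ->
      (f (cpair (code_seq A) d) = 1 <-> diag_unbounded A (sem d)).

(* SUP: the diagonal problem restricted to L ⊆ b_1^* ... b_n^*, where
   bs = [:: b_1; ...; b_n] enumerates A *)
Definition SUP_decidable (sem : nat -> lang) : Prop :=
  exists f, computable f /\
    forall (bs : seq nat) d, uniq bs ->
      (forall w, sem d w -> in_blocks bs w) ->
      (f (cpair (code_seq bs) d) = 1 <-> diag_unbounded bs (sem d)).

(* Main.v *)
Require Import Defs.
From mathcomp Require Import all_boot.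
From Stdlib Require Import FunctionalExtensionality Lia.
From mathcomp Require Import zify.
Set Implicit Arguments. Unset Strict Implicit. Unset Printing Implicit Defensive.

Lemma cpair_S0 y : cpair y.+1 0 = (cpair 0 y).+1.
Proof.
rewrite /cpair !addn0 add0n.
have -> : y.+1 * y.+2 = y * y.+1 + y.+1 * 2 by rewrite [y.+1 * _]mulnC; lia.
by rewrite divnDMl // addnS.
Qed.

Lemma cpair_SS x y : cpair x y.+1 = (cpair x.+1 y).+1.
Proof. by rewrite /cpair addnS addSn addnS. Qed.

Lemma cunpair_pair x y : cunpair (cpair x y) = (x, y).
Proof.
move: {2}(x + y) (erefl (x + y)) => s; elim: s x y => [|s IH] x y.
  by move/eqP; rewrite addn_eq0 => /andP[/eqP-> /eqP->].
elim: y x => [|y IHy] x.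
  rewrite addn0 => ->. by rewrite cpair_S0 /= IH.
move=> Hs. rewrite cpair_SS /= IHy //; by rewrite addSn -addnS.
Qed.

Lemma cfst_pair x y : cfst (cpair x y) = x.
Proof. by rewrite /cfst cunpair_pair. Qed.
Lemma csnd_pair x y : csnd (cpair x y) = y.
Proof. by rewrite /csnd cunpair_pair. Qed.

Lemma pair_unpair n : cpair (cfst n) (csnd n) = n.
Proof.
rewrite /cfst /csnd; elim: n => [//|n IH] /=.
case: (cunpair n) IH => [[|x] y] /= <-.
  by rewrite cpair_S0.
by rewrite cpair_SS.
Qed.

Lemma c_ext f g : computable f -> (forall x, f x = g x) -> computable g.
Proof. by move=> Hf E; rewrite -(functional_extensionality _ _ E). Qed.

Lemma c_id : computable (fun x => x).
Proof. apply: (c_ext (c_pair c_fst c_snd)) => x; exact: pair_unpair. Qed.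

Lemma c_const k : computable (fun _ => k).
Proof. elim: k => [|k IH]; [exact: c_zero| exact: (c_comp c_succ IH)]. Qed.

Fixpoint primr (f g : nat -> nat) a n :=
  match n with 0 => f a | n'.+1 => g (cpair a (cpair n' (primr f g a n'))) end.
Definition prim f g z := primr f g (cfst z) (csnd z).

Lemma prim_eq f g a n : prim f g (cpair a n) = primr f g a n.
Proof. by rewrite /prim cfst_pair csnd_pair. Qed.

Lemma c_prim f g : computable f -> computable g -> computable (prim f g).
Proof.
move=> Hf Hg; apply: (c_rec Hf Hg) => [a|a n]; rewrite !prim_eq //.
Qed.

Create HintDb comp.
Ltac cs := repeat (rewrite cfst_pair || rewrite csnd_pair).
#[global] Hint Resolve c_fst c_snd c_succ c_id c_const : comp.

Ltac ctac :=
  match goal with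
  | |- computable (fun _ => ?c) => apply: c_const
  | |- computable (fun x => x) => apply: c_id
  | |- computable (fun x => cpair (@?f x) (@?g x)) => apply: (@c_pair f g); ctac
  | |- computable (fun x => ?F (@?g x)) => apply: (@c_comp F g); [ctac | ctac]
  | |- computable ?F => first [solve [eauto 10 with comp] | idtac]
  end.

Definition PRED := fun n => prim (fun _ => 0) (fun w => cfst (csnd w)) (cpair 0 n).
Lemma c_PRED : computable PRED.
Proof. rewrite /PRED; ctac; apply: c_prim; ctac. Qed.
#[global] Hint Resolve c_PRED : comp.
Lemma PRED_eq n : PRED n = n.-1.
Proof. by rewrite /PRED prim_eq; case: n => //= n; rewrite csnd_pair cfst_pair. Qed.

Definition IFZ := fun z => prim (fun a => cfst a) (fun w => csnd (cfst w)) (cpair (csnd z) (cfst z)).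
Lemma c_IFZ : computable IFZ.
Proof. rewrite /IFZ; ctac; apply: c_prim; ctac. Qed.
#[global] Hint Resolve c_IFZ : comp.
Lemma IFZ_eq c x y : IFZ (cpair c (cpair x y)) = if c == 0 then x else y.
Proof.
by rewrite /IFZ; cs; rewrite prim_eq; case: c => //= *; cs.
Qed.

Definition ITER (F : nat -> nat) := fun z =>
  prim (fun a => csnd a) (fun w => F (cpair (cfst (cfst w)) (csnd (csnd w))))
     (cpair (cpair (cfst z) (csnd (csnd z))) (cfst (csnd z))).
Lemma c_ITER F : computable F -> computable (ITER F).
Proof. move=> HF; rewrite /ITER; ctac; apply: c_prim; ctac. Qed.
#[global] Hint Resolve c_ITER : comp.
Lemma ITER_eq F env k x : ITER F (cpair env (cpair k x)) = iter k (fun y => F (cpair env y)) x.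
Proof.
rewrite /ITER !cfst_pair !csnd_pair cfst_pair prim_eq.
elim: k => [|k IH] /=; first by rewrite csnd_pair.
by rewrite !cfst_pair !csnd_pair IH.
Qed.

Definition SUCC2 := fun w => S (csnd w).
Lemma c_SUCC2 : computable SUCC2. Proof. rewrite /SUCC2; ctac. Qed.
#[global] Hint Resolve c_SUCC2 : comp.
Definition ADD := fun z => ITER SUCC2 (cpair 0 (cpair (csnd z) (cfst z))).
Lemma c_ADD : computable ADD. Proof. rewrite /ADD; ctac. Qed.
#[global] Hint Resolve c_ADD : comp.
Lemma ADD_eq x y : ADD (cpair x y) = x + y.
Proof.
rewrite /ADD cfst_pair csnd_pair ITER_eq; elim: y => [|y IH] /=; first by rewrite addn0.
by rewrite /SUCC2 csnd_pair IH addnS.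
Qed.

Definition PRED2 := fun w => PRED (csnd w).
Lemma c_PRED2 : computable PRED2. Proof. rewrite /PRED2; ctac. Qed.
#[global] Hint Resolve c_PRED2 : comp.
Definition SUB := fun z => ITER PRED2 (cpair 0 (cpair (csnd z) (cfst z))).
Lemma c_SUB : computable SUB. Proof. rewrite /SUB; ctac. Qed.
#[global] Hint Resolve c_SUB : comp.
Lemma SUB_eq x y : SUB (cpair x y) = x - y.
Proof.
rewrite /SUB cfst_pair csnd_pair ITER_eq; elim: y => [|y IH] /=; first by rewrite subn0.
by rewrite /PRED2 csnd_pair IH PRED_eq subnS.
Qed.

Definition EQB := fun z => IFZ (cpair (ADD (cpair (SUB z) (SUB (cpair (csnd z) (cfst z))))) (cpair 1 0)).
Lemma c_EQB : computable EQB. Proof. rewrite /EQB; ctac. Qed.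
#[global] Hint Resolve c_EQB : comp.
Lemma EQB_eq x y : EQB (cpair x y) = (x == y).
Proof.
rewrite /EQB cfst_pair csnd_pair !SUB_eq ADD_eq IFZ_eq.
case: eqP => /= H; case: eqP => // H2; lia.
Qed.

Definition OR := fun z => IFZ (cpair (cfst z) (cpair (csnd z) 1)).
Definition AND := fun z => IFZ (cpair (cfst z) (cpair 0 (csnd z))).
Lemma c_OR : computable OR. Proof. rewrite /OR; ctac. Qed.
Lemma c_AND : computable AND. Proof. rewrite /AND; ctac. Qed.
#[global] Hint Resolve c_OR c_AND : comp.
Lemma OR_eq (p q : bool) : OR (cpair p q) = p || q.
Proof. by rewrite /OR cfst_pair csnd_pair IFZ_eq; case: p. Qed.
Lemma AND_eq (p q : bool) : AND (cpair p q) = p && q.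
Proof. by rewrite /AND cfst_pair csnd_pair IFZ_eq; case: p. Qed.

Definition FSTEP (F : nat -> nat) := fun s =>
  IFZ (cpair (cfst (csnd s)) (cpair s (cpair (cfst s)
     (cpair (csnd (PRED (cfst (csnd s))))
        (F (cpair (cfst s) (cpair (cfst (PRED (cfst (csnd s)))) (csnd (csnd s))))))))).
Definition FOLD (F : nat -> nat) := fun z =>
  csnd (csnd (ITER (fun w => FSTEP F (csnd w)) (cpair 0 (cpair (cfst (csnd z)) z)))).
Lemma c_FOLD F : computable F -> computable (FOLD F).
Proof.
move=> HF; rewrite /FOLD; ctac.
apply: c_ITER; ctac. rewrite /FSTEP; ctac.
Qed.
#[global] Hint Resolve c_FOLD : comp.

Lemma code_size s : size s <= code_seq s.
Proof.
elim: s => //= x s IH; rewrite ltnS (leq_trans IH) // /cpair leq_addl //.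
Qed.

Lemma FOLD_eq F env s acc :
  FOLD F (cpair env (cpair (code_seq s) acc)) =
  foldl (fun acc e => F (cpair env (cpair e acc))) acc s.
Proof.
rewrite /FOLD !csnd_pair cfst_pair ITER_eq.
have step0 : forall a, FSTEP F (cpair env (cpair 0 a)) = cpair env (cpair 0 a).
  by move=> a; rewrite /FSTEP !csnd_pair !cfst_pair IFZ_eq.
have stepS : forall e s a, FSTEP F (cpair env (cpair (code_seq (e :: s)) a)) =
   cpair env (cpair (code_seq s) (F (cpair env (cpair e a)))).
  by move=> e s' a; rewrite /FSTEP !csnd_pair !cfst_pair IFZ_eq /= PRED_eq /= csnd_pair cfst_pair.
suff H : forall k s acc, size s <= k ->
   iter k (fun y => FSTEP F (csnd (cpair 0 y))) (cpair env (cpair (code_seq s) acc)) =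
   cpair env (cpair 0 (foldl (fun acc e => F (cpair env (cpair e acc))) acc s)).
  by rewrite H ?code_size // !csnd_pair.
elim=> [|k IH] [|e s'] a // Hs; rewrite iterSr csnd_pair.
  by rewrite step0 (IH [::]).
by rewrite stepS IH.
Qed.

Ltac ctac ::=
  match goal with
  | |- computable (fun _ => ?c) => apply: c_const
  | |- computable (fun x => x) => apply: c_id
  | |- computable (FOLD ?F) => apply: c_FOLD; ctac
  | |- computable (ITER ?F) => apply: c_ITER; ctac
  | |- computable (fun x => cpair (@?f x) (@?g x)) => apply: (@c_pair f g); ctac
  | |- computable (fun x => ?F (@?g x)) => apply: (@c_comp F g); [ctac | ctac]
  | |- computable ?F => first [solve [eauto 10 with comp] | idtac]
  end.

Lemma foldl_mirror T U (f : T -> U -> T) (F : nat -> nat) (encT : T -> nat) (encU : U -> nat) env :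
  (forall t u, F (cpair env (cpair (encU u) (encT t))) = encT (f t u)) ->
  forall s t, foldl (fun acc e => F (cpair env (cpair e acc))) (encT t) (map encU s) = encT (foldl f t s).
Proof. by move=> H; elim=> //= u s IH t; rewrite H IH. Qed.

Definition LEN := fun x => FOLD (fun w => S (csnd (csnd w))) (cpair 0 (cpair x 0)).
Lemma c_LEN : computable LEN. Proof. rewrite /LEN; ctac. Qed.
#[global] Hint Resolve c_LEN : comp.
Lemma LEN_eq s : LEN (code_seq s) = size s.
Proof.
rewrite /LEN FOLD_eq; have H : forall t, foldl (fun acc e => S (csnd (csnd (cpair 0 (cpair e acc))))) t s = t + size s.
  by elim: s => [|a s IH] t /=; [rewrite addn0 | rewrite !csnd_pair IH addnS].
by rewrite H.
Qed.

Definition SUM := fun x => FOLD (fun w => ADD (cpair (cfst (csnd w)) (csnd (csnd w)))) (cpair 0 (cpair x 0)).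
Lemma c_SUM : computable SUM. Proof. rewrite /SUM; ctac. Qed.
#[global] Hint Resolve c_SUM : comp.
Lemma SUM_eq s : SUM (code_seq s) = sumn s.
Proof.
rewrite /SUM FOLD_eq; have H : forall t, foldl (fun acc e => ADD (cpair (cfst (csnd (cpair 0 (cpair e acc)))) (csnd (csnd (cpair 0 (cpair e acc)))))) t s = t + sumn s.
  elim: s => [|a s IH] t /=; first by rewrite addn0.
  by cs; rewrite ADD_eq IH; lia.
by rewrite H.
Qed.

Definition FRESH := fun x => S (SUM x).
Lemma c_FRESH : computable FRESH. Proof. rewrite /FRESH; ctac. Qed.
#[global] Hint Resolve c_FRESH : comp.

Definition DESC := fun z => csnd (FOLD (fun w => cpair (S (cfst (csnd (csnd w))))
   (S (cpair (ADD (cpair (cfst w) (cfst (csnd (csnd w))))) (csnd (csnd (csnd w))))))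
   (cpair (cfst z) (cpair (csnd z) (cpair 0 0)))).
Lemma c_DESC : computable DESC. Proof. rewrite /DESC; ctac. Qed.
#[global] Hint Resolve c_DESC : comp.
Lemma DESC_eq M A : DESC (cpair M (code_seq A)) = code_seq (rev (map (addn M) (iota 0 (size A)))).
Proof.
rewrite /DESC; cs; rewrite FOLD_eq.
have H : forall k l, foldl (fun acc e => cpair (S (cfst (csnd (csnd (cpair M (cpair e acc))))))
   (S (cpair (ADD (cpair (cfst (cpair M (cpair e acc))) (cfst (csnd (csnd (cpair M (cpair e acc)))))))
     (csnd (csnd (csnd (cpair M (cpair e acc)))))))) (cpair k (code_seq l)) A
   = cpair (k + size A) (code_seq (rev (map (addn M) (iota k (size A))) ++ l)).
  elim: A => [|a A IH] k l /=; first by rewrite addn0.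
  cs; rewrite ADD_eq.
  have -> : (cpair (M + k) (code_seq l)).+1 = code_seq ((M + k) :: l) by [].
  by rewrite IH addSn -addnS rev_cons cat_rcons.
by rewrite (H 0 [::]) csnd_pair cats0.
Qed.

Definition REV := fun l => FOLD (fun w => S (cpair (cfst (csnd w)) (csnd (csnd w)))) (cpair 0 (cpair l 0)).
Lemma c_REV : computable REV. Proof. rewrite /REV; ctac. Qed.
#[global] Hint Resolve c_REV : comp.
Lemma REV_eq l : REV (code_seq l) = code_seq (rev l).
Proof.
rewrite /REV FOLD_eq.
have H : forall t, foldl (fun acc e => S (cpair (cfst (csnd (cpair 0 (cpair e acc)))) (csnd (csnd (cpair 0 (cpair e acc)))))) (code_seq t) l = code_seq (catrev l t).
  by elim: l => [|a l IH] t //=; cs; rewrite (IH (a :: t)).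
by rewrite (H [::]).
Qed.

Definition bsf (A : seq nat) := map (addn (sumn A).+1) (iota 0 (size A)).
Definition BS := fun cA => REV (DESC (cpair (FRESH cA) cA)).
Lemma c_BS : computable BS. Proof. rewrite /BS; ctac. Qed.
#[global] Hint Resolve c_BS : comp.
Lemma BS_eq A : BS (code_seq A) = code_seq (bsf A).
Proof. by rewrite /BS /FRESH SUM_eq DESC_eq REV_eq revK. Qed.

Definition sigmaR A := foldl (fun acc a => RAlt acc (RChr a)) RNone A.
Definition SIGMA := fun cA => FOLD (fun w => cpair 4 (cpair (csnd (csnd w)) (cpair 2 (cfst (csnd w))))) (cpair 0 (cpair cA (cpair 0 0))).
Lemma c_SIGMA : computable SIGMA. Proof. rewrite /SIGMA; ctac. Qed.
#[global] Hint Resolve c_SIGMA : comp.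
Lemma SIGMA_eq A : SIGMA (code_seq A) = code_regex (sigmaR A).
Proof.
rewrite /SIGMA FOLD_eq /sigmaR.
have H : forall r, foldl (fun acc e => cpair 4 (cpair (csnd (csnd (cpair 0 (cpair e acc)))) (cpair 2 (cfst (csnd (cpair 0 (cpair e acc))))))) (code_regex r) A = code_regex (foldl (fun acc a => RAlt acc (RChr a)) r A).
  by elim: A => [|a A IH] r //=; cs; rewrite -(IH (RAlt r (RChr a))).
by rewrite (H RNone).
Qed.

Definition SEG := fun z => cpair 5 (cpair 4 (cpair (cfst z) (cpair 3 (cpair (cpair 2 (csnd (csnd z))) (cpair 2 (cfst (csnd z))))))).
Lemma c_SEG : computable SEG. Proof. rewrite /SEG; ctac. Qed.
#[global] Hint Resolve c_SEG : comp.
Lemma SEG_eq r b a : SEG (cpair (code_regex r) (cpair b a)) = code_regex (RStar (RAlt r (RCat (RChr a) (RChr b)))).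
Proof. by rewrite /SEG; cs. Qed.

Definition catR r M c := (foldl (fun p a => (p.1.+1, RCat p.2 (RStar (RAlt r (RCat (RChr a) (RChr (M + p.1))))))) (0, REps) c).2.
Definition F7 := fun w => cpair (S (cfst (csnd (csnd w)))) (cpair 3 (cpair (csnd (csnd (csnd w)))
   (SEG (cpair (cfst (cfst w)) (cpair (ADD (cpair (csnd (cfst w)) (cfst (csnd (csnd w))))) (cfst (csnd w))))))).
Definition CATR := fun z => csnd (FOLD F7 (cpair (cfst z) (cpair (csnd z) (cpair 0 (cpair 1 0))))).
Lemma c_CATR : computable CATR. Proof. rewrite /CATR /F7; ctac. Qed.
#[global] Hint Resolve c_CATR : comp.
Lemma CATR_eq r M c : CATR (cpair (cpair (code_regex r) M) (code_seq c)) = code_regex (catR r M c).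
Proof.
rewrite /CATR; cs; rewrite FOLD_eq /catR.
have H : forall k rr, foldl (fun acc e => F7 (cpair (cpair (code_regex r) M) (cpair e acc))) (cpair k (code_regex rr)) c
  = let p := foldl (fun p a => (p.1.+1, RCat p.2 (RStar (RAlt r (RCat (RChr a) (RChr (M + p.1))))))) (k, rr) c in cpair p.1 (code_regex p.2).
  elim: c => [|a c IH] k rr //=.
  rewrite /F7; cs; rewrite ADD_eq SEG_eq.
  exact: (IH k.+1 (RCat rr (RStar (RAlt r (RCat (RChr a) (RChr (M + k))))))).
by rewrite (H 0 REps) /= csnd_pair.
Qed.

Definition altR r M cs := foldl (fun acc c => RAlt acc (catR r M c)) RNone cs.
Definition ALTR := fun z => FOLD (fun w => cpair 4 (cpair (csnd (csnd w)) (CATR (cpair (cfst w) (cfst (csnd w))))))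
   (cpair (cfst z) (cpair (csnd z) (cpair 0 0))).
Lemma c_ALTR : computable ALTR. Proof. rewrite /ALTR; ctac. Qed.
#[global] Hint Resolve c_ALTR : comp.
Lemma ALTR_eq r M cs : ALTR (cpair (cpair (code_regex r) M) (code_seq (map code_seq cs))) = code_regex (altR r M cs).
Proof.
rewrite /ALTR; cs; rewrite FOLD_eq /altR.
have H : forall rr, foldl (fun acc e => cpair 4 (cpair (csnd (csnd (cpair (cpair (code_regex r) M) (cpair e acc))))
   (CATR (cpair (cfst (cpair (cpair (code_regex r) M) (cpair e acc))) (cfst (csnd (cpair (cpair (code_regex r) M) (cpair e acc))))))))
   (code_regex rr) (map code_seq cs) = code_regex (foldl (fun acc c => RAlt acc (catR r M c)) rr cs).
  elim: cs => [|c cs IH] rr //=; cs; rewrite CATR_eq.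
  by rewrite -(IH (RAlt rr (catR r M c))).
by rewrite (H RNone).
Qed.

Definition MEM := fun z => FOLD (fun w => OR (cpair (csnd (csnd w)) (EQB (cpair (cfst w) (cfst (csnd w))))))
   (cpair (cfst z) (cpair (csnd z) 0)).
Lemma c_MEM : computable MEM. Proof. rewrite /MEM; ctac. Qed.
#[global] Hint Resolve c_MEM : comp.
Lemma MEM_eq a c : MEM (cpair a (code_seq c)) = (a \in c).
Proof.
rewrite /MEM; cs; rewrite FOLD_eq.
have H : forall b : bool, foldl (fun acc e => OR (cpair (csnd (csnd (cpair a (cpair e acc)))) (EQB (cpair (cfst (cpair a (cpair e acc))) (cfst (csnd (cpair a (cpair e acc)))))))) b c = (b || (a \in c)).
  elim: c => [|e c IH] b /=; first by rewrite orbF.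
  by cs; rewrite EQB_eq OR_eq IH in_cons orbA.
exact: (H false).
Qed.

Definition covers (A c : seq nat) := all (fun a => a \in c) A.
Definition COVERS := fun z => FOLD (fun w => AND (cpair (csnd (csnd w)) (MEM (cpair (cfst (csnd w)) (cfst w)))))
   (cpair (csnd z) (cpair (cfst z) 1)).
Lemma c_COVERS : computable COVERS. Proof. rewrite /COVERS; ctac. Qed.
#[global] Hint Resolve c_COVERS : comp.
Lemma COVERS_eq A c : COVERS (cpair (code_seq A) (code_seq c)) = covers A c.
Proof.
rewrite /COVERS; cs; rewrite FOLD_eq.
have H : forall b : bool, foldl (fun acc e => AND (cpair (csnd (csnd (cpair (code_seq c) (cpair e acc)))) (MEM (cpair (cfst (csnd (cpair (code_seq c) (cpair e acc)))) (cfst (cpair (code_seq c) (cpair e acc))))))) b A = (b && covers A c).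
  elim: A => [|e A IH] b /=; first by rewrite andbT.
  by cs; rewrite MEM_eq AND_eq IH andbA.
exact: (H true).
Qed.

Definition ext (A : seq nat) (L : seq (seq nat)) :=
  foldl (fun acc c => foldl (fun acc' a => (a :: c) :: acc') acc A) [::] L.
Definition FIN := fun v => S (cpair (S (cpair (cfst (csnd v)) (cfst v))) (csnd (csnd v))).
Definition FOUT := fun w => FOLD FIN (cpair (cfst (csnd w)) (cpair (cfst w) (csnd (csnd w)))).
Definition EXT := fun z => FOLD FOUT (cpair (cfst z) (cpair (csnd z) 0)).
Lemma c_EXT : computable EXT. Proof. rewrite /EXT /FOUT /FIN; ctac. Qed.
#[global] Hint Resolve c_EXT : comp.
Notation cs2 L := (code_seq (map code_seq L)).
Lemma EXT_eq A L : EXT (cpair (code_seq A) (cs2 L)) = cs2 (ext A L).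
Proof.
rewrite /EXT; cs; rewrite FOLD_eq /ext.
have Hin : forall c acc, FOLD FIN (cpair (code_seq c) (cpair (code_seq A) (cs2 acc))) =
   cs2 (foldl (fun acc' a => (a :: c) :: acc') acc A).
  move=> c acc; rewrite FOLD_eq.
  elim: A acc => [|a A IH] acc //=.
  rewrite /FIN; cs. exact: (IH ((a :: c) :: acc)).
have H : forall acc, foldl (fun acc e => FOUT (cpair (code_seq A) (cpair e acc))) (cs2 acc) (map code_seq L)
   = cs2 (foldl (fun acc c => foldl (fun acc' a => (a :: c) :: acc') acc A) acc L).
  elim: L => [|c L IH] acc //=.
  rewrite /FOUT; cs; rewrite Hin; exact: IH.
exact: (H [::]).
Qed.

Definition tuples A k := iter k (ext A) [:: [::]].
Definition TUPLES := fun cA => ITER EXT (cpair cA (cpair (LEN cA) (S (cpair 0 0)))).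
Lemma c_TUPLES : computable TUPLES. Proof. rewrite /TUPLES; ctac. Qed.
#[global] Hint Resolve c_TUPLES : comp.
Lemma TUPLES_eq A : TUPLES (code_seq A) = cs2 (tuples A (size A)).
Proof.
rewrite /TUPLES ITER_eq LEN_eq /tuples.
elim: (size A) => [|k IH] //=.
by rewrite IH EXT_eq.
Qed.

Definition candsf A L := foldl (fun acc c => if covers A c then c :: acc else acc) [::] L.
Definition CANDS := fun cA => FOLD (fun w => IFZ (cpair (COVERS (cpair (cfst w) (cfst (csnd w))))
   (cpair (csnd (csnd w)) (S (cpair (cfst (csnd w)) (csnd (csnd w)))))))
   (cpair cA (cpair (TUPLES cA) 0)).
Lemma c_CANDS : computable CANDS. Proof. rewrite /CANDS; ctac. Qed.
#[global] Hint Resolve c_CANDS : comp.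
Lemma CANDS_eq A : CANDS (code_seq A) = cs2 (candsf A (tuples A (size A))).
Proof.
rewrite /CANDS TUPLES_eq FOLD_eq /candsf.
set F := (fun acc0 e : nat => _).
have H : forall L acc, foldl F (cs2 acc) (map code_seq L) = cs2 (foldl (fun acc c => if covers A c then c :: acc else acc) acc L).
  elim=> [|c L IH] acc //=.
  rewrite {2}/F; cs; rewrite COVERS_eq IFZ_eq.
  case: (covers A c) => /=; [exact: (IH (c :: acc)) | exact: IH].
exact: (H _ [::]).
Qed.

Definition bigR A := RCat (altR (sigmaR A) (sumn A).+1 (candsf A (tuples A (size A)))) (RStar (sigmaR A)).
Definition RCODE := fun cA => cpair 3 (cpair (ALTR (cpair (cpair (SIGMA cA) (FRESH cA)) (CANDS cA))) (cpair 5 (SIGMA cA))).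
Lemma c_RCODE : computable RCODE. Proof. rewrite /RCODE; ctac. Qed.
#[global] Hint Resolve c_RCODE : comp.
Lemma RCODE_eq A : RCODE (code_seq A) = code_regex (bigR A).
Proof. by rewrite /RCODE SIGMA_eq CANDS_eq /FRESH SUM_eq ALTR_eq. Qed.

Lemma rm_cat r s u : rmatch (RCat r s) u <-> exists u1 u2, u = u1 ++ u2 /\ rmatch r u1 /\ rmatch s u2.
Proof.
split; first by move=> H; inversion H; subst; eauto.
by case=> [u1 [u2 [-> [H1 H2]]]]; constructor.
Qed.
Lemma rm_alt r s u : rmatch (RAlt r s) u <-> rmatch r u \/ rmatch s u.
Proof.
split; first by move=> H; inversion H; subst; auto.
by case=> H; [apply: m_altl | apply: m_altr].
Qed.
Lemma rm_chr a u : rmatch (RChr a) u <-> u = [:: a].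
Proof. split; [by move=> H; inversion H | move=> ->; constructor]. Qed.
Lemma rm_eps u : rmatch REps u <-> u = [::].
Proof. split; [by move=> H; inversion H | move=> ->; constructor]. Qed.
Lemma rm_none u : ~ rmatch RNone u.
Proof. by move=> H; inversion H. Qed.

Lemma star_ind r (P : seq nat -> Prop) : P [::] -> (forall u v, rmatch r u -> P v -> P (u ++ v)) ->
  forall w, rmatch (RStar r) w -> P w.
Proof.
move=> H0 HS w H; remember (RStar r) as r' eqn:E.
induction H; try discriminate; first by [].
case: E => E; subst r0; apply: HS => //; exact: IHrmatch2.
Qed.

Lemma sigma_match A u : rmatch (sigmaR A) u <-> exists2 a, a \in A & u = [:: a].
Proof.
rewrite /sigmaR.
suff H : forall r, rmatch (foldl (fun acc a => RAlt acc (RChr a)) r A) u <->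
   rmatch r u \/ exists2 a, a \in A & u = [:: a].
  rewrite H; split; [case=> // /rm_none [] | by right].
elim: A => [|a A IH] r /=.
  split; [by left | by case=> // [[]]].
rewrite IH rm_alt rm_chr; split.
  case=> [[H|->]|[b Hb ->]]; [by left| by right; exists a; rewrite ?inE ?eqxx| by right; exists b; rewrite ?inE ?Hb ?orbT].
case=> [H|[b]]; first by left; left.
rewrite inE => /orP[/eqP->|Hb] ->; first by left; right.
by right; exists b.
Qed.

Definition segR r b a := RStar (RAlt r (RCat (RChr a) (RChr b))).

Fixpoint catP r M j (c : seq nat) (u : seq nat) : Prop :=
  match c with
  | [::] => u = [::]
  | a :: c' => exists v w, u = v ++ w /\ rmatch (segR r (M + j) a) v /\ catP r M j.+1 c' w
  end.

Lemma catR_match r M c u : rmatch (catR r M c) u <-> catP r M 0 c u.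
Proof.
rewrite /catR.
suff H : forall j rr u, rmatch (foldl (fun p a => (p.1.+1, RCat p.2 (RStar (RAlt r (RCat (RChr a) (RChr (M + p.1))))))) (j, rr) c).2 u <->
   exists u0 u1, u = u0 ++ u1 /\ rmatch rr u0 /\ catP r M j c u1.
  rewrite H; split.
    by case=> [u0 [u1 [-> [/rm_eps -> H1]]]].
  by move=> H1; exists [::], u; split=> //; split=> //; constructor.
elim: c => [|a c IH] j rr u0 /=.
  split; first by move=> H; exists u0, [::]; rewrite cats0.
  by case=> [v [w [-> [H ->]]]]; rewrite cats0.
rewrite IH; split.
  case=> [x [y [-> [/rm_cat [x1 [x2 [-> [H1 H2]]]] H3]]]].
  exists x1, (x2 ++ y); split; first by rewrite catA.
  split=> //; exists x2, y; split=> //.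
case=> [x [y [-> [H1 [v [w [-> [H2 H3]]]]]]]].
exists (x ++ v), w; split; first by rewrite catA.
by split=> //; apply/rm_cat; exists x, v.
Qed.

Lemma altR_match r M cs u : rmatch (altR r M cs) u <-> exists2 c, c \in cs & rmatch (catR r M c) u.
Proof.
rewrite /altR.
suff H : forall rr, rmatch (foldl (fun acc c => RAlt acc (catR r M c)) rr cs) u <->
   rmatch rr u \/ exists2 c, c \in cs & rmatch (catR r M c) u.
  rewrite H; split; [case=> // /rm_none [] | by right].
elim: cs => [|c cs IH] rr /=.
  split; [by left | by case=> // [[]]].
rewrite IH rm_alt; split.
  case=> [[H|H]|[c' Hc H]]; [by left| by right; exists c; rewrite ?inE ?eqxx| by right; exists c'; rewrite ?inE ?Hc ?orbT].
case=> [H|[c']]; first by left; left.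
rewrite inE => /orP[/eqP->|Hc] H; first by left; right.
by right; exists c'.
Qed.

Lemma ext_mem A L x : x \in ext A L <-> exists a c, [/\ a \in A, c \in L & x = a :: c].
Proof.
rewrite /ext.
have Hin : forall c acc, x \in foldl (fun acc' a => (a :: c) :: acc') acc A <->
   x \in acc \/ exists2 a, a \in A & x = a :: c.
  move=> c; elim: A => [|a A IH] acc /=.
    by split; [left | case=> // [[]]].
  rewrite IH inE; split.
    case=> [/orP[/eqP->|H]|[b Hb ->]]; [right; exists a; rewrite ?inE ?eqxx //| by left| right; exists b; rewrite ?inE ?Hb ?orbT //].
  case=> [H|[b]]; first by left; rewrite H orbT.
  by rewrite inE => /orP[/eqP->|Hb] ->; [left; rewrite eqxx | right; exists b].
suff H : forall acc, x \in foldl (fun acc c => foldl (fun acc' a => (a :: c) :: acc') acc A) acc L <->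
   x \in acc \/ exists a c, [/\ a \in A, c \in L & x = a :: c].
  by rewrite H; split; [case=> // | right].
elim: L => [|c L IH] acc /=.
  by split; [left | case=> // [[a [c []]]]].
rewrite IH Hin; split.
  case=> [[H|[a Ha ->]]|[a [c' [Ha Hc ->]]]]; [by left| right; exists a, c; rewrite inE eqxx //| right; exists a, c'; rewrite inE Hc orbT //].
case=> [H|[a [c' [Ha]]]]; first by left; left.
rewrite inE => /orP[/eqP->|Hc] ->; first by left; right; exists a.
by right; exists a, c'.
Qed.

Lemma tuples_mem A k x : x \in tuples A k <-> size x = k /\ all (fun a => a \in A) x.
Proof.
rewrite /tuples; elim: k x => [|k IH] x /=.
  by rewrite inE; split; [move/eqP-> | case=> /size0nil ->].
rewrite ext_mem; split.
  by case=> [a [c [Ha /IH [Hs Hc] ->]]] /=; rewrite Hs Ha Hc.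
case: x => [|a c] [] //= [Hs] /andP[Ha Hc]; exists a, c; split=> //; exact/IH.
Qed.

Lemma cands_mem A L x : x \in candsf A L <-> x \in L /\ covers A x.
Proof.
rewrite /candsf.
suff H : forall acc, x \in foldl (fun acc c => if covers A c then c :: acc else acc) acc L <->
   x \in acc \/ (x \in L /\ covers A x).
  by rewrite H; split; [case=> // | right].
elim: L => [|c L IH] acc /=.
  by split; [left | case=> // [[]]].
rewrite IH; case Hc: (covers A c).
  rewrite inE; split.
    case=> [/orP[/eqP->|H]|[H1 H2]]; [right; rewrite inE eqxx //| by left| right; rewrite inE H1 orbT //].
  case=> [H|[]]; first by left; rewrite H orbT.
  by rewrite inE => /orP[/eqP->|H] H2; [left; rewrite eqxx| right].
split.
  by case=> [H|[H1 H2]]; [left | right; rewrite inE H1 orbT].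
case=> [H|[]]; first by left.
by rewrite inE => /orP[/eqP->|H] H2; [rewrite Hc in H2 | right].
Qed.

Lemma le_sumn (A : seq nat) a : a \in A -> a <= sumn A.
Proof.
elim: A => //= b A IH; rewrite inE => /orP[/eqP->|H]; first exact: leq_addr.
by rewrite (leq_trans (IH H)) // leq_addl.
Qed.

Lemma piece_inv A a b u : rmatch (RAlt (sigmaR A) (RCat (RChr a) (RChr b))) u ->
  (exists2 x, x \in A & u = [:: x]) \/ u = [:: a; b].
Proof.
case/rm_alt=> [/sigma_match H|/rm_cat [u1 [u2 [-> [/rm_chr -> /rm_chr ->]]]]]; by [left|right].
Qed.

Lemma seg_all A a b v : rmatch (segR (sigmaR A) b a) v ->
  all (fun x => (x \in A) || (x == a) || (x == b)) v.
Proof.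
move=> Hv; apply: (@star_ind _ (fun v => all (fun x => (x \in A) || (x == a) || (x == b)) v) _ _ v Hv) => // u w /piece_inv [[x Hx ->]|->] H /=; first by rewrite Hx.
by rewrite !eqxx H !orbT.
Qed.

Lemma seg_count A a b v : b \notin A -> a \in A -> rmatch (segR (sigmaR A) b a) v ->
  count_mem b v <= count_mem a v.
Proof.
move=> Hb Ha Hv; apply: (@star_ind _ (fun v => count_mem b v <= count_mem a v) _ _ v Hv) => // u w /piece_inv [[x Hx ->]|->] H /=.
  have E1 : (x == b) = false by apply/eqP => E; rewrite -E Hx in Hb.
  have E2 : (b == x) = false by apply/eqP => E; rewrite E Hx in Hb.
  by rewrite ?E1 ?E2 add0n (leq_trans H) // leq_addl.
have E1 : (a == b) = false by apply/eqP => E; rewrite -E Ha in Hb.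
have E2 : (b == a) = false by apply/eqP => E; rewrite E Ha in Hb.
by rewrite !eqxx ?E1 ?E2 /= !add0n !add1n ltnS.
Qed.

Lemma seg_filter A a b (S : seq nat) v : b \in S -> (forall x, x \in A -> x \notin S) -> a \in A ->
  rmatch (segR (sigmaR A) b a) v -> exists k, filter (fun x => x \in S) v = nseq k b.
Proof.
move=> Hb HA Ha Hv.
apply: (@star_ind _ (fun v => exists k, filter (fun x => x \in S) v = nseq k b) _ _ v Hv); first by exists 0.
move=> u w /piece_inv [[x Hx ->]|->] [k Hk] /=.
  by rewrite (negbTE (HA x Hx)) Hk; exists k.
by rewrite (negbTE (HA a Ha)) Hb Hk; exists k.+1.
Qed.

Section CatP.
Variables (A : seq nat) (M : nat).
Hypothesis HM : forall x, x \in A -> x < M.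

Lemma notA k : M + k \notin A.
Proof. by apply/negP => /HM; rewrite ltnNge leq_addr. Qed.

Lemma catP_letters j c u : all (fun a => a \in A) c -> catP (sigmaR A) M j c u ->
  forall x, x \in u -> x \in A \/ exists2 k, j <= k & x = M + k.
Proof.
elim: c j u => [|a c IH] j u /=; first by move=> _ -> x.
case/andP=> Ha Hc [v [w [-> [Hv Hw]]]] x; rewrite mem_cat => /orP[Hx|Hx].
  move/allP: (seg_all Hv) => /(_ x Hx) /orP[/orP[H|/eqP->]|/eqP->]; [by left|by left|].
  by right; exists j.
case: (IH _ _ Hc Hw x Hx) => [H|[k Hk ->]]; [by left| right; exists k => //; exact: ltnW].
Qed.

Lemma catP_count j c u i : all (fun a => a \in A) c -> catP (sigmaR A) M j c u -> i < size c ->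
  count_mem (M + (j + i)) u <= count_mem (nth 0 c i) u.
Proof.
elim: c j u i => [|a c IH] j u i //=.
case/andP=> Ha Hc [v [w [-> [Hv Hw]]]]; rewrite !count_cat.
case: i => [|i] Hi /=.
  rewrite addn0; have -> : count_mem (M + j) w = 0.
    apply/eqP; rewrite -leqn0 leqNgt -has_count; apply/hasP => [[x Hx /eqP Ex]].
    case: (catP_letters Hc Hw Hx) => [H|[k Hk Ek]]; first by move: (notA j); rewrite -Ex H.
    by move: Ex; rewrite Ek => /eqP; rewrite eqn_add2l => /eqP E; rewrite E ltnn in Hk.
  by rewrite addn0 (leq_trans (seg_count (notA j) Ha Hv)) // leq_addr.
have -> : count_mem (M + (j + i.+1)) v = 0.
  apply/eqP; rewrite -leqn0 leqNgt -has_count; apply/hasP => [[x Hx /eqP Ex]].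
  move/allP: (seg_all Hv) => /(_ x Hx) /orP[/orP[H|/eqP E]|/eqP E].
  - by move: (notA (j + i.+1)); rewrite -Ex H.
  - by move: (notA (j + i.+1)); rewrite -Ex E Ha.
  - by move: Ex; rewrite E => /eqP; rewrite eqn_add2l -{1}(addn0 j) eqn_add2l.
rewrite add0n -addSnnS; apply: leq_trans (IH _ _ _ Hc Hw Hi) _; exact: leq_addl.
Qed.

Lemma catP_blocks (S : seq nat) j c u : all (fun a => a \in A) c -> catP (sigmaR A) M j c u ->
  (forall k, k < size c -> M + (j + k) \in S) -> (forall x, x \in A -> x \notin S) ->
  in_blocks (map (addn M) (iota j (size c))) (filter (fun x => x \in S) u).
Proof.
elim: c j u => [|a c IH] j u /=; first by move=> _ ->.
case/andP=> Ha Hc [v [w [-> [Hv Hw]]]] HS HA.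
have Hb : M + j \in S by move: (HS 0 erefl); rewrite addn0.
case: (seg_filter Hb HA Ha Hv) => k Hk.
exists k, (filter (fun x => x \in S) w); split; first by rewrite filter_cat Hk.
apply: IH => // k' Hk'; rewrite addSnnS; exact: HS.
Qed.

End CatP.

Definition markw (a b : nat) (w : seq nat) := flatten (map (fun x => if x == a then [:: x; b] else [:: x]) w).

Fixpoint marked (M j : nat) (c : seq nat) (us : seq (seq nat)) : seq nat :=
  match c, us with
  | a :: c', w :: us' => markw a (M + j) w ++ marked M j.+1 c' us'
  | _, _ => [::]
  end.

Lemma ins_refl B w : ins B w w.
Proof. elim: w => [|x w IH]; constructor => //. Qed.

Lemma ins_cat B w1 u1 w2 u2 : ins B w1 u1 -> ins B w2 u2 -> ins B (w1 ++ w2) (u1 ++ u2).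
Proof.
move=> H1 H2; elim: H1 => //= [x w u _ IH|b w u Hb _ IH]; [exact: ins_keep | exact: ins_add IH].
Qed.

Lemma markw_ins B a b w : b \in B -> ins B w (markw a b w).
Proof.
move=> Hb; elim: w => [|x w IH]; first constructor.
rewrite /markw /= -/(markw a b w).
case: (x == a) => /=; [apply: ins_keep; exact: ins_add Hb IH | exact: ins_keep IH].
Qed.

Lemma ins_count B w u a : ins B w u -> a \notin B -> count_mem a u = count_mem a w.
Proof.
move=> H Ha; elim: H => //= [x w0 u0 _ IH|b w0 u0 Hb _ IH]; first by rewrite IH.
have -> : (b == a) = false by apply/eqP => E; rewrite -E Hb in Ha.
by rewrite IH.
Qed.

Lemma markw_seg (A : seq nat) a b w : all (fun x => x \in A) w -> a \in A ->
  rmatch (segR (sigmaR A) b a) (markw a b w).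
Proof.
move=> Hw Ha; elim: w Hw => [|x w IH]; first constructor.
rewrite /markw /= -/(markw a b w).
case/andP=> Hx Hw; apply: m_starS; last exact: IH.
case: eqP => [->|_].
  apply: m_altr; apply/rm_cat; exists [:: a], [:: b]; split=> //; split; constructor.
by apply: m_altl; apply/sigma_match; exists x.
Qed.

Lemma markw_count (A : seq nat) a b w : all (fun x => x \in A) w -> b \notin A ->
  count_mem b (markw a b w) = count_mem a w.
Proof.
move=> Hw Hb; elim: w Hw => [|x w IH] // /andP[Hx Hw].
rewrite /markw /= -/(markw a b w) count_cat.
have E1 : (x == b) = false by apply/eqP => E; rewrite -E Hx in Hb.
have E2 : (b == x) = false by apply/eqP => E; rewrite E Hx in Hb.
case: (eqVneq x a) => [Exa|Hxa] /=.
  by rewrite IH // -Exa E1 eqxx.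
by rewrite E1 IH.
Qed.

Lemma marked_catP (A : seq nat) M j c us : size us = size c -> all (fun w => all (fun x => x \in A) w) us ->
  all (fun a => a \in A) c -> catP (sigmaR A) M j c (marked M j c us).
Proof.
elim: c j us => [|a c IH] j [|w us] //= [Hs] /andP[Hw Hus] /andP[Ha Hc].
exists (markw a (M + j) w), (marked M j.+1 c us); split=> //; split; first exact: markw_seg.
exact: IH.
Qed.

Lemma marked_ins B M j c us : (forall k, k < size c -> M + (j + k) \in B) -> size us = size c ->
  ins B (flatten us) (marked M j c us).
Proof.
elim: c j us => [|a c IH] j [|w us] //=; first by move=> *; constructor.
move=> HB [Hs].
apply: ins_cat; first by apply: markw_ins; move: (HB 0 erefl); rewrite addn0.
apply: IH => // k Hk; rewrite addSnnS; exact: HB.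
Qed.

Lemma marked_count (A : seq nat) M j c us i : (forall k, M + k \notin A) -> size us = size c ->
  all (fun w => all (fun x => x \in A) w) us -> i < size c ->
  count_mem (nth 0 c i) (nth [::] us i) <= count_mem (M + (j + i)) (marked M j c us).
Proof.
move=> HA; elim: c j us i => [|a c IH] j [|w us] i //= [Hs] /andP[Hw Hus].
rewrite count_cat; case: i => [|i] Hi /=.
  by rewrite addn0 (markw_count (A := A)) // leq_addr.
rewrite -addSnnS; apply: leq_trans (IH _ _ _ Hs Hus Hi) _; exact: leq_addl.
Qed.

Lemma split_first (S : seq nat) m w : (exists2 a, a \in S & m <= count_mem a w) ->
  exists p s a, [/\ w = p ++ s, a \in S, m <= count_mem a p & forall a', a' \in S -> count_mem a' p <= m].
Proof.
elim/last_ind: w => [|w x IH].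
  case=> a Ha; rewrite leqn0 => /eqP ->; exists [::], [::], a; split=> //.
case: (boolP [exists i : 'I_(size S), m <= count_mem (nth 0 S i) w]).
  case/existsP=> i Hi; case: IH.
    by exists (nth 0 S i) => //; rewrite mem_nth.
  move=> p [s [a [-> Ha Hm Hall]]]; exists p, (rcons s x), a; split=> //.
  by rewrite rcons_cat.
rewrite negb_exists => /forallP Hall [a Ha Hm].
exists (rcons w x), [::], a; split=> //; first by rewrite cats0.
move=> a' Ha'; have Hlt : count_mem a' w < m.
  have Hi : index a' S < size S by rewrite index_mem.
  by move: (Hall (Ordinal Hi)) => /=; rewrite nth_index // ltnNge.
rewrite -cats1 count_cat /= addn0; move: Hlt; case: (x == a') => /= ?; lia.
Qed.

Lemma greedy m k : forall (S : seq nat) w, size S = k -> uniq S ->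
  (forall a, a \in S -> k * m <= count_mem a w) ->
  exists c us rest, [/\ size c = k, c =i S, size us = k, w = flatten us ++ rest &
     forall i, i < k -> m <= count_mem (nth 0 c i) (nth [::] us i)].
Proof.
elim: k => [|k IH] S w HS HU Hc.
  exists [::], [::], w; split=> //; by move/size0nil: HS => ->.
case: S HS HU Hc => [//|s0 S0] HS HU Hc.
case: (@split_first (s0 :: S0) m w).
  exists s0; first by rewrite inE eqxx.
  by apply: leq_trans (Hc s0 _); [rewrite mulSn leq_addr | rewrite inE eqxx].
move=> p [s [a [Ew Ha Hm Hle]]].
set S' := rem a (s0 :: S0).
have HS' : size S' = k by rewrite /S' size_rem // HS.
have HU' : uniq S' by rewrite /S' rem_uniq.
have Hc' : forall a', a' \in S' -> k * m <= count_mem a' s.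
  move=> a' Ha'; have Ha'S := mem_rem Ha'.
  move: (Hc a' Ha'S) (Hle a' Ha'S); rewrite Ew count_cat mulSn; lia.
case: (IH S' s HS' HU' Hc') => c [us [rest [Hsc Hmem Hsu Es Hi]]].
exists (a :: c), (p :: us), rest; split=> //=; first by rewrite Hsc.
- move=> x; rewrite inE Hmem /S' (mem_rem_uniq _ HU) inE /=.
  by case: eqVneq => [->|] //=.
- by rewrite Hsu.
- by rewrite Ew Es catA.
- by case=> [|i] //= /Hi.
Qed.

Lemma all_flat (p : pred nat) us : all p (flatten us) = all (all p) us.
Proof. by elim: us => //= w us IH; rewrite all_cat IH. Qed.

Lemma star_sigma (A : seq nat) w : all (fun x => x \in A) w -> rmatch (RStar (sigmaR A)) w.
Proof.
elim: w => [|x w IH] /=; first constructor.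
case/andP=> Hx Hw; apply: (@m_starS _ [:: x] w); last exact: IH.
by apply/sigma_match; exists x.
Qed.

Lemma star_sigma_all (A : seq nat) w : rmatch (RStar (sigmaR A)) w -> all (fun x => x \in A) w.
Proof.
move=> H; apply: (@star_ind _ (fun w => all (fun x => x \in A) w) _ _ w H) => //.
by move=> u v /sigma_match [x Hx ->] Hv /=; rewrite Hx.
Qed.

Lemma bs_mem A x : x \in bsf A -> exists2 k, k < size A & x = (sumn A).+1 + k.
Proof. by case/mapP=> k; rewrite mem_iota add0n => /andP[_ Hk] ->; exists k. Qed.

Lemma bs_mem' A k : k < size A -> (sumn A).+1 + k \in bsf A.
Proof. by move=> Hk; apply/mapP; exists k => //; rewrite mem_iota add0n. Qed.

Lemma count_filter_in (S : seq nat) b u : b \in S -> count_mem b (filter (fun x => x \in S) u) = count_mem b u.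
Proof.
move=> Hb; rewrite count_filter; apply: eq_count => x /=.
by case: eqVneq => [->|] //=; rewrite Hb.
Qed.

Lemma count_notin (A : seq nat) b u : all (fun x => x \in A) u -> b \notin A -> count_mem b u = 0.
Proof.
move=> Hu Hb; apply/eqP; rewrite -leqn0 leqNgt -has_count; apply/hasP => [[x Hx /eqP E]].
by move/allP: Hu => /(_ x Hx); rewrite E (negbTE Hb).
Qed.

Theorem lemma4p2 (sem : nat -> lang) :
  full_trio sem -> SUP_decidable sem -> diagonal_decidable sem.
Proof.
move=> [_ [[P [cP HP]] [[U [cU HU]] [I [cI HI]]]]] [g [cg Hg]].
exists (fun x => g (cpair (BS (cfst x)) (P (cpair (BS (cfst x))
   (I (cpair (U (cpair (BS (cfst x)) (csnd x))) (RCODE (cfst x)))))))).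
split; first by ctac.
move=> A d HA Hsub; rewrite cfst_pair csnd_pair BS_eq RCODE_eq.
set bs := bsf A.
set M := (sumn A).+1.
have HM : forall x, x \in A -> x < M by move=> x /le_sumn.
have HnA : forall k, M + k \notin A.
  by move=> k; apply/negP => /HM; rewrite ltnNge leq_addr.
have HAbs : forall x, x \in A -> x \notin bs.
  by move=> x Hx; apply/negP => /bs_mem [k _ E]; move: (HnA k); rewrite -E Hx.
have Hbsu : uniq bs by rewrite /bs /bsf map_inj_uniq ?iota_uniq //; exact: addnI.
set d3 := P _.
have Hd3 : forall w, sem d3 w <-> exists u, (exists v, sem d v /\ ins bs v u) /\
     rmatch (bigR A) u /\ w = filter (fun x => x \in bs) u.
  move=> w; rewrite HP; split.
    by case=> u [/HI [/HU Hu Hr] ->]; exists u.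
  by case=> u [Hu [Hr ->]]; exists u; split=> //; apply/HI; split=> //; apply/HU.
have Hdec : forall u, rmatch (bigR A) u -> exists c u1 u2,
    [/\ u = u1 ++ u2, size c = size A, all (fun a => a \in A) c, covers A c
        & catP (sigmaR A) M 0 c u1 /\ all (fun x => x \in A) u2].
  move=> u /rm_cat [u1 [u2 [-> [/altR_match [c Hc /catR_match Hu1] /star_sigma_all Hu2]]]].
  case/cands_mem: Hc => /tuples_mem [Hs Hall] Hcov.
  by exists c, u1, u2; split.
have Hblocks : forall w, sem d3 w -> in_blocks bs w.
  move=> w /Hd3 [u [_ [/Hdec [c [u1 [u2 [-> Hs Hall Hcov [Hu1 Hu2]]]]] ->]]].
  rewrite filter_cat.
  have -> : filter (fun x => x \in bs) u2 = [::].
    apply/eqP; rewrite -size_eq0 size_filter -leqn0 leqNgt -has_count.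
    apply/hasP => [[x Hx Hxb]]; move/allP: Hu2 => /(_ x Hx) /HAbs; by rewrite Hxb.
  have Eb : bs = map (addn M) (iota 0 (size c)) by rewrite Hs.
  rewrite cats0 {1}Eb.
  apply: (@catP_blocks A M bs 0 c u1 Hall Hu1) => // k Hk; rewrite add0n; apply: bs_mem'; by rewrite -Hs.
rewrite (Hg bs d3 Hbsu Hblocks); split.
- move=> Hdu m; case: (Hdu m) => w [/Hd3 [u [[v [Hv Hins]] [Hr ->]]] Hw].
  exists v; split=> // a Ha.
  case/Hdec: Hr => c [u1 [u2 [Eu Hs Hall Hcov [Hu1 Hu2]]]].
  have Hac : a \in c by move/allP: Hcov => /(_ a Ha).
  set i := index a c.
  have Hi : i < size c by rewrite index_mem.
  have Hb : M + i \in bs by apply: bs_mem'; rewrite -Hs.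
  move: (Hw _ Hb); rewrite count_filter_in // Eu count_cat (count_notin Hu2 (HnA i)) addn0.
  move/leq_trans => /(_ _ (catP_count HM Hall Hu1 Hi)); rewrite nth_index // => H.
  rewrite -(ins_count Hins (HAbs a Ha)) Eu count_cat.
  by apply: leq_trans H _; exact: leq_addr.
- move=> Hdu m; case: (Hdu (size A * m)) => v [Hv Hcnt].
  case: (@greedy m (size A) A v erefl HA Hcnt) => c [us [rest [Hs Hmem Hsu Ev Hi]]].
  have Hvall : all (fun x => x \in A) v by apply/allP => x; move: x; exact: (allP (Hsub v Hv)).
  have Hvall' := Hvall; rewrite Ev all_cat all_flat in Hvall'; case/andP: Hvall' => Hus Hrest.
  have Hcall : all (fun a => a \in A) c by apply/allP => x; rewrite Hmem.
  have Hcov : covers A c by apply/allP => x; rewrite Hmem.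
  exists (filter (fun x => x \in bs) (marked M 0 c us ++ rest)); split.
    apply/Hd3; exists (marked M 0 c us ++ rest); split; last split; last by [].
      exists v; split=> //; rewrite Ev; apply: ins_cat; last exact: ins_refl.
      apply: marked_ins; last by rewrite Hsu Hs.
      by move=> k Hk; rewrite add0n; apply: bs_mem'; rewrite -Hs.
    apply/rm_cat; exists (marked M 0 c us), rest; split=> //; split; last exact: star_sigma.
    apply/altR_match; exists c.
      by apply/cands_mem; split=> //; apply/tuples_mem.
    apply/catR_match; apply: marked_catP => //; by rewrite Hsu Hs.
  move=> b /bs_mem [k Hk Eb]; rewrite count_filter_in; last by rewrite Eb bs_mem'.
  rewrite count_cat Eb.
  apply: leq_trans (Hi k Hk) _; apply: leq_trans (leq_addr _ _).
  have := @marked_count A M 0 c us k HnA; rewrite add0n; apply => //; by rewrite ?Hsu ?Hs.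
Qed.
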